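(* Let $A\subset\{1,2,3,\dots\}$ be a set whose natural density $d(A)=\lim_{n\to\infty}\#(A\cap[1,n])/n$ exists and satisfies $d(A)>0$. Let $F_A(s)=-\sum_{j\in A}\ln(1-e^{sj})$ for $s<0$. Then for every integer $m\ge0$, $$F_A^{(m)}(-s)\sim d(A)\,\zeta(2)\,\Gamma(m+1)\,\frac{1}{s^{m+1}},\quad\text{as } s\downarrow0.$$
   Context: $F_A$ is the fulcrum $s\mapsto\ln P_A(e^s)$ of $P_A(z)=\prod_{j\in A}(1-z^j)^{-1}$, the generating function of partitions with parts in $A$. $F_A^{(m)}$ is the $m$-th derivative. $\alpha(s)\sim\beta(s)$ means $\alpha(s)/\beta(s)\to1$. $\zeta$ is the Riemann zeta function and $\Gamma$ the Gamma function. *)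

(* Defs.v *)
From Stdlib Require Import Reals Arith.
From Coquelicot Require Import Coquelicot.
Open Scope R_scope.

(* A subset of the positive integers is encoded as a boolean predicate on nat
   together with the hypothesis [A 0 = false]. *)

Definition countA (A : nat -> bool) (n : nat) : R :=
  sum_n_m (fun k => if A k then 1 else 0) 1 n.

Definition has_density (A : nat -> bool) (d : R) : Prop :=
  is_lim_seq (fun n => countA A n / INR n) d.

Definition F_A (A : nat -> bool) (s : R) : R :=
  - Series (fun j => if A j then ln (1 - exp (s * INR j)) else 0).

Definition zeta (s : R) : R :=
  Series (fun n => / Rpower (INR (S n)) s).

Definition Gamma_nat_succ (m : nat) : R := INR (Factorial.fact m).

(* Main.v *)
Require Import Defs.
From Stdlib Require Import Reals.
From Coquelicot Require Import Coquelicot.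
From Stdlib Require Import Lra Lia Psatz.
Open Scope R_scope.

Lemma ex_series_le_R (a b : nat -> R) : (forall n, Rabs (a n) <= b n) -> ex_series b -> ex_series a.
Proof. intros H Hb. apply (@ex_series_le R_AbsRing R_CompleteNormedModule a b); auto. Qed.

Lemma is_series_ext_R (a b : nat -> R) l : (forall n, a n = b n) -> is_series a l -> is_series b l.
Proof. intros H Ha. apply (is_series_ext a b l H Ha). Qed.

Lemma ex_series_minus_R (a b : nat -> R) : ex_series a -> ex_series b -> ex_series (fun n => a n - b n).
Proof. intros. apply (@ex_series_minus R_AbsRing R_NormedModule a b); auto. Qed.
Lemma ex_series_plus_R (a b : nat -> R) : ex_series a -> ex_series b -> ex_series (fun n => a n + b n).
Proof. intros. apply (@ex_series_plus R_AbsRing R_NormedModule a b); auto. Qed.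
Lemma ex_series_scal_l_R (c : R) (a : nat -> R) : ex_series a -> ex_series (fun n => c * a n).
Proof. intros. apply (@ex_series_scal_l R_AbsRing R_NormedModule c a); auto. Qed.

Lemma ex_series_ext_R (a b : nat -> R) : (forall n, a n = b n) -> ex_series a -> ex_series b.
Proof. intros H Ha. apply (ex_series_ext a b H Ha). Qed.

Ltac req := match goal with |- @eq _ ?a ?b => change (@eq R a b) end.

Definition Rr (p k : nat) : R := INR (Factorial.fact (k + p)) / INR (Factorial.fact k).

Lemma fact_pos_R n : 0 < INR (Factorial.fact n).
Proof. apply lt_0_INR, Factorial.lt_O_fact. Qed.

Lemma Rr_0 k : Rr 0 k = 1.
Proof. unfold Rr. rewrite Nat.add_0_r. field. apply Rgt_not_eq, fact_pos_R. Qed.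

Lemma Rr_S p k : Rr (S p) k = (INR k + INR (S p)) * Rr p k.
Proof.
  unfold Rr. rewrite Nat.add_succ_r. change (Factorial.fact (S (k+p))) with (S (k+p) * Factorial.fact (k+p))%nat.
  rewrite mult_INR, S_INR, plus_INR, S_INR. field. apply Rgt_not_eq, fact_pos_R.
Qed.

Lemma Rr_S' p k : Rr (S p) k = INR (S k) * Rr p (S k).
Proof.
  unfold Rr. rewrite Nat.add_succ_r, <- Nat.add_succ_l.
  change (Factorial.fact (S k)) with (S k * Factorial.fact k)%nat.
  rewrite mult_INR. field. split. apply Rgt_not_eq, fact_pos_R. apply not_0_INR; lia.
Qed.

Lemma Rr_zero p : Rr p 0 = INR (Factorial.fact p).
Proof. unfold Rr. simpl. lra. Qed.

Lemma Rr_pos p k : 0 < Rr p k.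
Proof. unfold Rr. apply Rdiv_lt_0_compat; apply fact_pos_R. Qed.

Lemma pow_le_Rr p k : INR k ^ p <= Rr p k.
Proof.
  induction p. simpl. rewrite Rr_0. lra.
  rewrite Rr_S. change (INR k ^ S p) with (INR k * INR k ^ p). pose proof (pos_INR (S p)). apply Rmult_le_compat.
  apply pos_INR. apply pow_le, pos_INR. lra. exact IHp.
Qed.

Lemma Rr_diff p : exists c, 0 <= c /\ forall k, Rr (S p) k - INR k ^ S p <= c * Rr p k.
Proof.
  induction p.
  - exists 1. split. lra. intros k. rewrite Rr_S, !Rr_0. simpl. lra.
  - destruct IHp as [c [Hc H]]. exists (c + INR (S (S p))). split.
    pose proof (pos_INR (S (S p))). lra.
    intros k. rewrite (Rr_S (S p)).
    assert (E: (INR k + INR (S (S p))) * Rr (S p) k - INR k ^ S (S p)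
       = INR k * (Rr (S p) k - INR k ^ S p) + INR (S (S p)) * Rr (S p) k) by (simpl; ring).
    rewrite E. 
    assert (H1: INR k * (Rr (S p) k - INR k ^ S p) <= INR k * (c * Rr p k)).
    { apply Rmult_le_compat_l. apply pos_INR. apply H. }
    assert (H2: INR k * (c * Rr p k) <= c * Rr (S p) k).
    { rewrite Rr_S. pose proof (pos_INR (S p)). pose proof (Rr_pos p k).
      replace (c * ((INR k + INR (S p)) * Rr p k)) with (INR k * (c * Rr p k) + c * INR (S p) * Rr p k) by ring.
      assert (0 <= c * INR (S p) * Rr p k). apply Rmult_le_pos. apply Rmult_le_pos; lra. lra. lra. }
    lra.
Qed.

Lemma CV_disk_radius a r : 0 <= r -> CV_disk a r -> Rbar_le r (CV_radius a).
Proof.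
  intros _ H. unfold CV_radius. destruct (Lub_Rbar_correct (CV_disk a)) as [Hub _].
  apply Hub. exact H.
Qed.

Lemma PS_derive_n_one p n : PS_derive_n p (fun _ => 1) n = Rr p n.
Proof. unfold PS_derive_n, Rr. ring. Qed.

Lemma rad_one x : Rabs x < 1 -> Rbar_lt (Rabs x) (CV_radius (fun _ => 1)).
Proof.
  intros Hx. set (r := (1 + Rabs x)/2).
  assert (Hr : Rabs x < r < 1) by (unfold r; lra).
  assert (H0 : 0 <= Rabs x) by apply Rabs_pos.
  eapply Rbar_lt_le_trans with (y := Finite r). simpl; lra.
  apply CV_disk_radius. lra.
  unfold CV_disk. apply ex_series_ext with (a := fun n => r ^ n).
  intros n. rewrite Rmult_1_l. rewrite Rabs_pos_eq. reflexivity. apply pow_le. lra.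
  apply ex_series_geom. rewrite Rabs_pos_eq; lra.
Qed.

Lemma rad_Rr p x : Rabs x < 1 -> Rbar_lt (Rabs x) (CV_radius (fun n => Rr p n)).
Proof.
  intros Hx. rewrite (CV_radius_ext _ (PS_derive_n p (fun _ => 1))).
  rewrite CV_radius_derive_n. apply rad_one; auto.
  intros n. now rewrite PS_derive_n_one.
Qed.

Lemma ex_series_Rr p x : Rabs x < 1 -> ex_series (fun n => Rr p n * x ^ n).
Proof.
  intros Hx. pose proof (CV_radius_inside _ _ (rad_Rr p x Hx)) as H.
  unfold ex_pseries in H. eapply ex_series_ext; [|exact H].
  intros n. simpl. rewrite pow_n_pow. unfold scal; simpl. unfold mult; simpl. ring.
Qed.

Lemma rad_le (a : nat -> R) p x : (forall n, Rabs (a n) <= Rr p n) -> Rabs x < 1 ->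
  Rbar_lt (Rabs x) (CV_radius a).
Proof.
  intros Ha Hx. set (r := (1 + Rabs x)/2).
  assert (Hr : Rabs x < r < 1) by (unfold r; lra).
  assert (H0 : 0 <= Rabs x) by apply Rabs_pos.
  eapply Rbar_lt_le_trans with (y := Finite r). simpl; lra.
  apply CV_disk_radius. lra.
  unfold CV_disk. apply ex_series_le_R with (b := fun n => Rr p n * r ^ n).
  intros n. rewrite Rabs_Rabsolu, Rabs_mult.
  rewrite (Rabs_pos_eq (r ^ n)). apply Rmult_le_compat_r. apply pow_le; lra. apply Ha.
  apply pow_le; lra.
  apply ex_series_Rr. rewrite Rabs_pos_eq; lra.
Qed.

Definition prevB (B : nat -> R) (n : nat) : R := match n with O => 0 | S k => B k end.

Lemma tele (B : nat -> R) x : ex_series (fun n => B n * x ^ n) ->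
  is_series (fun n => (B n - prevB B n) * x ^ n) ((1 - x) * Series (fun n => B n * x ^ n)).
Proof.
  intros H. set (S0 := Series (fun n => B n * x ^ n)).
  assert (H1 : is_series (fun n => B n * x ^ n) S0) by (apply Series_correct; auto).
  assert (H2 : is_series (fun n => x * (B n * x ^ n)) (x * S0)) by (apply (is_series_scal x _ _ H1)).
  assert (H3 : is_series (fun n => prevB B n * x ^ n) (x * S0)).
  { apply is_series_decr_1.
    match goal with |- is_series _ ?l => replace l with (x * S0) end.
    eapply is_series_ext_R; [|exact H2]. intros n. simpl. ring.
    change (x * S0 = x * S0 - 0 * 1). ring. }
  pose proof (is_series_minus _ _ _ _ H1 H3) as H4.
  replace ((1 - x) * S0) with (plus S0 (opp (x * S0))).
  eapply is_series_ext_R; [|exact H4]. intros n. change ( B n * x ^ n - prevB B n * x ^ n = (B n - prevB B n) * x ^ n). ring.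
  change (S0 - x * S0 = (1 - x) * S0). ring.
Qed.

Lemma is_series_Rr p x : Rabs x < 1 ->
  is_series (fun n => Rr p n * x ^ n) (INR (Factorial.fact p) / (1 - x) ^ (S p)).
Proof.
  intros Hx. assert (Hx1 : 0 < 1 - x) by (apply Rabs_def2 in Hx; lra).
  induction p.
  - apply (is_series_ext_R (fun n => x ^ n)).
    intros n. rewrite Rr_0. ring.
    replace (INR (Factorial.fact 0) / (1 - x) ^ 1) with (/ (1 - x)).
    apply is_series_geom; auto. simpl. field. lra.
  - pose proof (tele (Rr (S p)) x (ex_series_Rr (S p) x Hx)) as H.
    assert (E : forall n, (Rr (S p) n - prevB (Rr (S p)) n) * x ^ n = INR (S p) * (Rr p n * x ^ n)).
    { intros [|n]; simpl prevB.
      - rewrite Rr_zero, Rr_zero. change (Factorial.fact (S p)) with (S p * Factorial.fact p)%nat.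
        rewrite mult_INR. ring.
      - rewrite (Rr_S p (S n)). rewrite (Rr_S' p n). ring. }
    apply (is_series_ext_R _ _ _ E) in H.
    assert (H' : is_series (fun n => INR (S p) * (Rr p n * x ^ n)) (INR (S p) * (INR (Factorial.fact p) / (1 - x) ^ S p))) by exact (is_series_scal (INR (S p)) _ _ IHp).
    assert (Heq := is_series_unique _ _ H). 
    pose proof (is_series_unique _ _ H') as Heq'.
    assert (HS : (1 - x) * Series (fun n => Rr (S p) n * x ^ n) = INR (S p) * (INR (Factorial.fact p) / (1 - x) ^ S p)).
    { rewrite <- Heq. rewrite <- Heq'. reflexivity. }
    replace (INR (Factorial.fact (S p)) / (1 - x) ^ S (S p)) with (Series (fun n => Rr (S p) n * x ^ n)).
    apply Series_correct, ex_series_Rr; auto.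
    change (Factorial.fact (S p)) with (S p * Factorial.fact p)%nat. rewrite mult_INR.
    apply Rmult_eq_reg_l with (1 - x). rewrite HS. simpl. field. split. apply pow_nonzero; lra. lra. lra.
Qed.

Lemma Series_abs_le (a b : nat -> R) : (forall n, Rabs (a n) <= b n) -> ex_series b -> Rabs (Series a) <= Series b.
Proof.
  intros H Hb. eapply Rle_trans. apply Series_Rabs.
  apply ex_series_le_R with b; auto. intros n; rewrite Rabs_Rabsolu; auto.
  apply Series_le; auto. intros n; split; [apply Rabs_pos | auto].
Qed.

Lemma tail_small (a : nat -> R) : ex_series a -> forall eps, 0 < eps ->
  exists N, forall n, (N <= n)%nat -> Rabs (Series (fun k => a (n + k)%nat)) < eps.
Proof.
  intros Ha eps He. pose proof (Series_correct _ Ha) as H.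
  assert (H' : is_lim_seq (sum_n a) (Series a)) by exact H.
  apply is_lim_seq_spec in H'. destruct (H' (mkposreal eps He)) as [N HN]. simpl in HN.
  exists (S N). intros n Hn. rewrite (Series_incr_n a n) in HN by (auto; lia).
  specialize (HN (pred n) ltac:(lia)). rewrite sum_n_Reals in HN.
  replace (Series (fun k => a (n + k)%nat)) with
    (- (sum_f_R0 a (Init.Nat.pred n) - (sum_f_R0 a (Init.Nat.pred n) + Series (fun k => a (n + k)%nat)))) by ring.
  rewrite Rabs_Ropp. exact HN.
Qed.

Lemma derive_sum_n (u u' : nat -> R -> R) y K :
  (forall n, (n <= K)%nat -> is_derive (u n) y (u' n y)) ->
  is_derive (fun z => sum_n (fun n => u n z) K) y (sum_n (fun n => u' n y) K).
Proof.
  induction K; intros H.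
  - apply (is_derive_ext (u 0%nat)). intros t. rewrite sum_O. auto.
    rewrite sum_O. apply H; lia.
  - apply (is_derive_ext (fun z => plus (sum_n (fun n => u n z) K) (u (S K) z))).
    intros t. rewrite sum_Sn. auto.
    rewrite sum_Sn. apply (@is_derive_plus R_AbsRing R_NormedModule (fun z => sum_n (fun n => u n z) K) (u (S K))). apply IHK. intros; apply H; lia. apply H; lia.
Qed.

Lemma MVT_bound (f f' : R -> R) y h M :
  (forall z, Rabs (z - y) <= Rabs h -> is_derive f z (f' z)) ->
  (forall z, Rabs (z - y) <= Rabs h -> Rabs (f' z) <= M) ->
  Rabs (f (y + h) - f y) <= M * Rabs h.
Proof.
  intros Hd Hb.
  assert (Hmm: forall z, Rmin y (y+h) <= z <= Rmax y (y+h) -> Rabs (z - y) <= Rabs h).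
  { intros z Hz. unfold Rmin, Rmax in Hz. destruct (Rle_dec y (y+h));
    unfold Rabs; destruct (Rcase_abs (z-y)); destruct (Rcase_abs h); lra. }
  destruct (MVT_gen f y (y + h) f') as [c [Hc Hf]].
  - intros x Hx. apply Hd. apply Hmm. lra.
  - intros x Hx. apply continuity_pt_filterlim. apply (ex_derive_continuous f x).
    exists (f' x). apply Hd. apply Hmm. lra.
  - rewrite Hf. replace (y + h - y) with h by ring. rewrite Rabs_mult.
    apply Rmult_le_compat_r. apply Rabs_pos. apply Hb. apply Hmm. auto.
Qed.

Lemma series_derive (u u' : nat -> R -> R) (M : nat -> R) (y d : R) :
  0 < d ->
  (forall n z, Rabs (z - y) < d -> is_derive (u n) z (u' n z)) ->
  (forall n z, Rabs (z - y) < d -> Rabs (u' n z) <= M n) ->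
  ex_series M ->
  (forall z, Rabs (z - y) < d -> ex_series (fun n => u n z)) ->
  is_derive (fun z => Series (fun n => u n z)) y (Series (fun n => u' n y)).
Proof.
  intros Hd Hder Hbd HM Hex.
  assert (HM0 : forall n, 0 <= M n).
  { intros n. eapply Rle_trans; [apply Rabs_pos| apply (Hbd n y)]. rewrite Rminus_eq_0, Rabs_R0; lra. }
  assert (Hy : Rabs (y - y) < d) by (rewrite Rminus_eq_0, Rabs_R0; lra).
  assert (Hex' : ex_series (fun n => u' n y)).
  { apply ex_series_le_R with M; auto. }
  apply is_derive_Reals. intros eps Heps.
  destruct (tail_small M HM (eps/4) ltac:(lra)) as [N0 HN0].
  set (N := S N0).
  assert (HtM : Series (fun k => M (N + k)%nat) < eps / 4).
  { specialize (HN0 N ltac:(unfold N; lia)). apply Rabs_def2 in HN0. lra. }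
  assert (HexM : ex_series (fun k => M (N + k)%nat)) by (apply ex_series_incr_n; auto).
  pose proof (derive_sum_n u u' y (pred N) (fun n _ => Hder n y Hy)) as Hfin.
  apply is_derive_Reals in Hfin. destruct (Hfin (eps/2) ltac:(lra)) as [d1 Hd1].
  exists (mkposreal (Rmin d d1) ltac:(apply Rmin_pos; [lra | apply cond_pos])).
  simpl. intros h Hh0 Hh.
  assert (Hhd : Rabs h < d) by (eapply Rlt_le_trans; [exact Hh | apply Rmin_l]).
  assert (Hhd1 : Rabs h < d1) by (eapply Rlt_le_trans; [exact Hh | apply Rmin_r]).
  assert (Hyh : Rabs (y + h - y) < d) by (replace (y + h - y) with h by ring; auto).
  specialize (Hd1 h Hh0 Hhd1).
  rewrite (Series_incr_n _ N) by (unfold N; lia || auto; apply Hex; auto).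
  rewrite (Series_incr_n (fun n => u n y) N) by (unfold N; lia || auto; apply Hex; auto).
  rewrite (Series_incr_n (fun n => u' n y) N) by (unfold N; lia || auto).
  rewrite <- !sum_n_Reals.
  set (A1 := sum_n (fun n => u n (y + h)) (pred N)) in *.
  set (A0 := sum_n (fun n => u n y) (pred N)) in *.
  set (A' := sum_n (fun n => u' n y) (pred N)) in *.
  assert (Htail : Rabs (Series (fun k => u (N + k)%nat (y + h)) / h - Series (fun k => u (N + k)%nat y) / h
                        - Series (fun k => u' (N + k)%nat y)) <= eps / 2).
  { assert (E : Series (fun k => u (N + k)%nat (y + h)) / h - Series (fun k => u (N + k)%nat y) / h
                        - Series (fun k => u' (N + k)%nat y)
               = Series (fun k => (u (N + k)%nat (y + h) - u (N + k)%nat y) / h - u' (N + k)%nat y)).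
    { rewrite Series_minus. unfold Rdiv. rewrite Series_scal_r. rewrite Series_minus. ring.
      apply (ex_series_incr_n (fun n => u n (y+h))). apply Hex; auto.
      apply (ex_series_incr_n (fun n => u n y)). apply Hex; auto.
      apply ex_series_scal_r. apply ex_series_minus_R.
      apply (ex_series_incr_n (fun n => u n (y+h))). apply Hex; auto.
      apply (ex_series_incr_n (fun n => u n y)). apply Hex; auto.
      apply (ex_series_incr_n (fun n => u' n y)). auto. }
    rewrite E. eapply Rle_trans. apply Series_abs_le with (b := fun k => 2 * M (N + k)%nat).
    - intros k. 
      assert (Hk : Rabs (u (N + k)%nat (y + h) - u (N + k)%nat y) <= M (N + k)%nat * Rabs h).
      { apply MVT_bound with (f' := u' (N + k)%nat).
        intros z Hz; apply Hder; lra. intros z Hz; apply Hbd; lra. }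
      assert (Hk2 : Rabs (u' (N + k)%nat y) <= M (N + k)%nat) by (apply Hbd; auto).
      assert (Hh' : 0 < Rabs h) by (apply Rabs_pos_lt; auto).
      assert (Hq : Rabs (u (N + k)%nat (y + h) - u (N + k)%nat y) * / Rabs h <= M (N + k)%nat).
      { apply (Rmult_le_reg_r (Rabs h)); auto. rewrite Rmult_assoc, Rinv_l, Rmult_1_r; lra. }
      set (D := u (N + k)%nat (y + h) - u (N + k)%nat y) in *.
      set (w := u' (N + k)%nat y) in *.
      replace (D / h - w) with (D / h + - w) by ring.
      eapply Rle_trans; [apply Rabs_triang|]. rewrite Rabs_Ropp.
      unfold Rdiv. rewrite Rabs_mult, Rabs_inv. lra.
    - apply ex_series_scal_l_R. auto.
    - rewrite Series_scal_l. lra. }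
  replace ((A1 + Series (fun k => u (N + k)%nat (y + h)) - (A0 + Series (fun k => u (N + k)%nat y))) / h -
     (A' + Series (fun k => u' (N + k)%nat y))) with
    (((A1 - A0) / h - A') + (Series (fun k => u (N + k)%nat (y + h)) / h - Series (fun k => u (N + k)%nat y) / h
                        - Series (fun k => u' (N + k)%nat y))) by (field; auto).
  eapply Rle_lt_trans; [apply Rabs_triang|]. lra.
Qed.

Lemma sum_n_S_R (a : nat -> R) n : sum_n a (S n) = sum_n a n + a (S n).
Proof. rewrite sum_Sn. reflexivity. Qed.

Lemma sum_n_nonneg (a : nat -> R) n : (forall k, 0 <= a k) -> 0 <= sum_n a n.
Proof. intros H. induction n. rewrite sum_O. auto. rewrite sum_n_S_R. specialize (H (S n)). lra. Qed.

Lemma ex_series_pos_bound (a : nat -> R) B : (forall n, 0 <= a n) -> (forall n, sum_n a n <= B) -> ex_series a.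
Proof.
  intros Hp HB. destruct (growing_cv (sum_n a)) as [l Hl].
  - intros n. rewrite sum_n_S_R. specialize (Hp (S n)). lra.
  - exists B. intros x [i ->]. auto.
  - exists l. apply is_lim_seq_Reals in Hl. exact Hl.
Qed.

Lemma sum_le_Series (a : nat -> R) n : (forall k, 0 <= a k) -> ex_series a -> sum_n a n <= Series a.
Proof.
  intros Hp Ha. apply is_lim_seq_incr_compare with (u := sum_n a).
  exact (Series_correct _ Ha). intros k. rewrite sum_n_S_R. specialize (Hp (S k)). lra.
Qed.

Lemma term_le_Series (a : nat -> R) n : (forall k, 0 <= a k) -> ex_series a -> a n <= Series a.
Proof.
  intros Hp Ha. eapply Rle_trans; [|apply (sum_le_Series a n); auto].
  destruct n. rewrite sum_O. lra. rewrite sum_n_S_R. pose proof (sum_n_nonneg a n Hp). lra.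
Qed.

Lemma Series_le_bound (a : nat -> R) B : ex_series a -> (forall n, sum_n a n <= B) -> Series a <= B.
Proof.
  intros Ha HB. assert (H := is_lim_seq_le (sum_n a) (fun _ => B) (Series a) B HB (Series_correct _ Ha) (is_lim_seq_const B)).
  simpl in H. exact H.
Qed.

Lemma Series_nonneg' (a : nat -> R) : (forall k, 0 <= a k) -> ex_series a -> 0 <= Series a.
Proof. intros Hp Ha. eapply Rle_trans; [|apply (term_le_Series a 0); auto]. auto. Qed.

Lemma Series_sum_n (a : nat -> nat -> R) J : (forall j, ex_series (fun k => a j k)) ->
  ex_series (fun k => sum_n (fun j => a j k) J) /\
  Series (fun k => sum_n (fun j => a j k) J) = sum_n (fun j => Series (fun k => a j k)) J.
Proof.
  intros H. induction J.
  - split. eapply ex_series_ext; [|apply (H 0%nat)]. intros k; rewrite sum_O; auto.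
    rewrite sum_O. apply Series_ext. intros k; rewrite sum_O; auto.
  - destruct IHJ as [IH1 IH2]. split.
    + eapply ex_series_ext; [|apply (ex_series_plus_R _ _ IH1 (H (S J)))]. intros k; rewrite sum_n_S_R; auto.
    + rewrite sum_n_S_R. rewrite <- IH2. rewrite <- Series_plus; auto.
      apply Series_ext. intros k; rewrite sum_n_S_R; auto.
Qed.

Lemma fub_le (a : nat -> nat -> R) : (forall j k, 0 <= a j k) ->
  (forall k, ex_series (fun j => a j k)) -> ex_series (fun k => Series (fun j => a j k)) ->
  (forall j, ex_series (fun k => a j k)) /\ ex_series (fun j => Series (fun k => a j k)) /\
  Series (fun j => Series (fun k => a j k)) <= Series (fun k => Series (fun j => a j k)).
Proof.
  intros Hp Hc HL.
  assert (Hr : forall j, ex_series (fun k => a j k)).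
  { intros j. apply ex_series_le_R with (fun k => Series (fun j => a j k)); auto.
    intros k. rewrite Rabs_pos_eq; auto. apply term_le_Series with (a := fun j => a j k); auto. }
  assert (Hpart : forall J, sum_n (fun j => Series (fun k => a j k)) J <= Series (fun k => Series (fun j => a j k))).
  { intros J. destruct (Series_sum_n a J Hr) as [_ E]. rewrite <- E.
    apply Series_le; auto. intros k. split. apply sum_n_nonneg; auto.
    apply sum_le_Series with (a := fun j => a j k); auto. }
  assert (Hex : ex_series (fun j => Series (fun k => a j k))).
  { apply ex_series_pos_bound with (Series (fun k => Series (fun j => a j k))); auto.
    intros n. apply Series_nonneg'; auto. }
  split; auto. split; auto. apply Series_le_bound; auto.
Qed.

Lemma fubini_nonneg (a : nat -> nat -> R) : (forall j k, 0 <= a j k) ->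
  (forall k, ex_series (fun j => a j k)) -> ex_series (fun k => Series (fun j => a j k)) ->
  ex_series (fun j => Series (fun k => a j k)) /\
  Series (fun j => Series (fun k => a j k)) = Series (fun k => Series (fun j => a j k)).
Proof.
  intros Hp Hc HL. destruct (fub_le a Hp Hc HL) as [Hr [Hex Hle]].
  destruct (fub_le (fun k j => a j k) (fun j k => Hp k j) Hr Hex) as [_ [_ Hle2]].
  split; auto. lra.
Qed.

Lemma exp_pow' x n : exp x ^ n = exp (INR n * x).
Proof.
  induction n. simpl. rewrite Rmult_0_l, exp_0. auto.
  simpl pow. rewrite IHn, <- exp_plus, S_INR. f_equal. ring.
Qed.

Definition lnb (k : nat) : R := match k with O => 0 | S _ => / INR k end.

Lemma log_series_P x : Rabs x < 1 -> - ln (1 - x) = PSeries lnb x.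
Proof.
  intros Hx. assert (Hx' : -1 < x < 1) by (apply Rabs_def2 in Hx; lra).
  assert (Hrad : forall z, Rabs z < 1 -> Rbar_lt (Rabs z) (CV_radius lnb)).
  { intros z Hz. apply rad_le with 0%nat; auto. intros [|n]; rewrite Rr_0; cbv beta iota delta [lnb].
    rewrite Rabs_R0; lra. rewrite Rabs_pos_eq. rewrite <- Rinv_1. apply Rinv_le_contravar. lra.
    rewrite S_INR. pose proof (pos_INR n). lra. left; apply Rinv_0_lt_compat, lt_0_INR; lia. }
  set (g := fun z => - ln (1 - z) - PSeries lnb z).
  assert (Hg : forall z, Rabs (z - 0) <= Rabs x -> is_derive g z 0).
  { intros z Hz. rewrite Rminus_0_r in Hz. assert (Hz1 : Rabs z < 1) by lra.
    assert (Hz' : -1 < z < 1) by (apply Rabs_def2 in Hz1; lra).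
    unfold g. replace 0 with (minus (/ (1 - z)) (PSeries (PS_derive lnb) z)).
    apply (@is_derive_minus R_AbsRing R_NormedModule (fun z => - ln (1 - z)) (PSeries lnb)).
    auto_derive. lra. field. lra.
    apply is_derive_PSeries; auto.
    unfold minus, plus, opp; simpl.
    assert (E : PSeries (PS_derive lnb) z = / (1 - z)).
    { rewrite <- (is_series_unique _ _ (is_series_geom z Hz1)). unfold PSeries.
      apply Series_ext. intros n. unfold PS_derive.
      cbv beta iota delta [lnb]. field. apply not_0_INR; lia. }
    rewrite E. ring. }
  pose proof (MVT_bound g (fun _ => 0) 0 x 0 Hg) as H.
  assert (H' : forall z, Rabs (z - 0) <= Rabs x -> Rabs 0 <= 0) by (intros; rewrite Rabs_R0; lra).
  specialize (H H'). rewrite Rplus_0_l, Rmult_0_l in H.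
  assert (Hg0 : g 0 = 0). { unfold g. rewrite PSeries_0. replace (1 - 0) with 1 by ring. rewrite ln_1. simpl. ring. }
  rewrite Hg0, Rminus_0_r in H. unfold g in H.
  assert (Rabs (- ln (1 - x) - PSeries lnb x) = 0) by (pose proof (Rabs_pos (- ln (1 - x) - PSeries lnb x)); lra).
  apply Rabs_eq_0 in H0. lra.
Qed.

Lemma log_series x : 0 <= x < 1 -> - ln (1 - x) = Series (fun k => x ^ (S k) / INR (S k)).
Proof.
  intros Hx. rewrite log_series_P by (rewrite Rabs_pos_eq; lra).
  unfold PSeries. rewrite Series_incr_1. cbv beta iota delta [lnb]. rewrite Rmult_0_l, Rplus_0_l.
  apply Series_ext. intros n. cbv beta iota delta [lnb]. unfold Rdiv. ring.
  assert (H : Rbar_lt (Rabs x) (CV_radius lnb)).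
  { apply rad_le with 0%nat. intros [|n]; rewrite Rr_0; cbv beta iota delta [lnb].
    rewrite Rabs_R0; lra. rewrite Rabs_pos_eq. rewrite <- Rinv_1. apply Rinv_le_contravar. lra.
    rewrite S_INR. pose proof (pos_INR n). lra. left; apply Rinv_0_lt_compat, lt_0_INR; lia.
    rewrite Rabs_pos_eq; lra. }
  pose proof (CV_radius_inside _ _ H) as H2. unfold ex_pseries in H2.
  eapply ex_series_ext; [|exact H2]. intros n. rewrite pow_n_pow. change (x ^ n * lnb n = lnb n * x ^ n). ring.
Qed.

Definition aR (A : nat -> bool) (j : nat) : R := if A j then 1 else 0.
Definition alpha A m j := aR A j * INR j ^ m.
Definition beta (m k : nat) : R := INR (S k) ^ m / INR (S k).
Definition PA A m X := PSeries (alpha A m) X.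
Definition EE A m y := Series (fun k => beta m k * PA A m (exp (INR (S k) * y))).

Lemma aR_bound A j : 0 <= aR A j <= 1.
Proof. unfold aR; destruct (A j); lra. Qed.

Lemma alpha_nonneg A m j : 0 <= alpha A m j.
Proof. unfold alpha. apply Rmult_le_pos. apply aR_bound. apply pow_le, pos_INR. Qed.

Lemma alpha_0 A m : A 0%nat = false -> alpha A m 0 = 0.
Proof. intros H. unfold alpha, aR. rewrite H. ring. Qed.

Lemma alpha_le A m j : alpha A m j <= Rr m j.
Proof.
  unfold alpha. eapply Rle_trans; [|apply pow_le_Rr].
  pose proof (aR_bound A j). pose proof (pow_le (INR j) m (pos_INR j)). nra.
Qed.

Lemma alpha_rad A m X : Rabs X < 1 -> Rbar_lt (Rabs X) (CV_radius (alpha A m)).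
Proof.
  intros H. apply rad_le with m; auto. intros n. rewrite Rabs_pos_eq. apply alpha_le. apply alpha_nonneg.
Qed.

Lemma ex_PA A m X : Rabs X < 1 -> ex_series (fun j => alpha A m j * X ^ j).
Proof.
  intros H. pose proof (CV_radius_inside _ _ (alpha_rad A m X H)) as H2. unfold ex_pseries in H2.
  eapply ex_series_ext; [|exact H2]. intros n. rewrite pow_n_pow. change (X ^ n * alpha A m n = alpha A m n * X ^ n). ring.
Qed.

Lemma PA_nonneg A m X : 0 <= X < 1 -> 0 <= PA A m X.
Proof.
  intros H. unfold PA, PSeries. apply Series_nonneg'. intros k. apply Rmult_le_pos. apply alpha_nonneg. apply pow_le; lra.
  apply ex_PA. rewrite Rabs_pos_eq; lra.
Qed.

Lemma PA_mono A m X X' : 0 <= X <= X' -> X' < 1 -> PA A m X <= PA A m X'.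
Proof.
  intros H H'. unfold PA, PSeries. apply Series_le. intros k. split.
  apply Rmult_le_pos. apply alpha_nonneg. apply pow_le; lra.
  apply Rmult_le_compat_l. apply alpha_nonneg. apply pow_incr; lra.
  apply ex_PA. rewrite Rabs_pos_eq; lra.
Qed.

Lemma pow_le_one q d : 0 <= q <= 1 -> q ^ d <= 1.
Proof. intros H. induction d. simpl; lra. simpl. pose proof (pow_le q d ltac:(lra)). nra. Qed.

Lemma pow_le_decr q n m : 0 <= q <= 1 -> (n <= m)%nat -> q ^ m <= q ^ n.
Proof.
  intros H Hnm. replace m with (n + (m - n))%nat by lia. rewrite pow_add.
  rewrite <- (Rmult_1_r (q ^ n)) at 2. apply Rmult_le_compat_l. apply pow_le; lra. apply pow_le_one; auto.
Qed.

Lemma PA_pow A m q k : A 0%nat = false -> 0 <= q < 1 -> PA A m (q ^ S k) <= q ^ k * PA A m q.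
Proof.
  intros HA Hq. unfold PA, PSeries. rewrite <- Series_scal_l. apply Series_le.
  intros [|j]. rewrite alpha_0; auto. simpl. lra.
  split. apply Rmult_le_pos. apply alpha_nonneg. apply pow_le, pow_le; lra.
  rewrite <- pow_mult. replace (q ^ k * (alpha A m (S j) * q ^ S j)) with (alpha A m (S j) * (q ^ k * q ^ S j)) by ring.
  apply Rmult_le_compat_l. apply alpha_nonneg. rewrite <- pow_add. apply pow_le_decr. lra. nia.
  apply ex_series_scal_l_R. apply ex_PA. rewrite Rabs_pos_eq; lra.
Qed.

Lemma pow_S_le_Rr m k : INR (S k) ^ m <= Rr m k.
Proof.
  induction m. simpl. rewrite Rr_0. lra.
  rewrite Rr_S. change (INR (S k) ^ S m) with (INR (S k) * INR (S k) ^ m).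
  apply Rmult_le_compat. apply pos_INR. apply pow_le, pos_INR.
  rewrite !S_INR. pose proof (pos_INR m). lra. auto.
Qed.

Lemma beta_nonneg m k : 0 <= beta m k.
Proof. unfold beta. apply Rmult_le_pos. apply pow_le, pos_INR. left; apply Rinv_0_lt_compat, lt_0_INR; lia. Qed.

Lemma beta_le m k : beta m k <= Rr m k.
Proof.
  eapply Rle_trans; [|apply pow_S_le_Rr]. unfold beta.
  assert (H1 : 1 <= INR (S k)) by (rewrite S_INR; pose proof (pos_INR k); lra).
  pose proof (pow_le (INR (S k)) m (pos_INR _)).
  unfold Rdiv. rewrite <- (Rmult_1_r (INR (S k) ^ m)) at 2. apply Rmult_le_compat_l; auto.
  rewrite <- Rinv_1. apply Rinv_le_contravar; lra.
Qed.

Lemma beta_S m k : beta (S m) k = INR (S k) * beta m k.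
Proof. unfold beta. replace (INR (S k) ^ S m) with (INR (S k) * INR (S k) ^ m) by reflexivity. unfold Rdiv. ring. Qed.

Lemma ex_EE A m y : A 0%nat = false -> y < 0 ->
  ex_series (fun k => beta m k * PA A m (exp (INR (S k) * y))).
Proof.
  intros HA Hy. set (q := exp y).
  assert (Hq : 0 <= q < 1). { unfold q. split. left; apply exp_pos. rewrite <- exp_0. apply exp_increasing; lra. }
  apply ex_series_le_R with (fun k => PA A m q * (Rr m k * q ^ k)).
  - intros k. rewrite <- exp_pow'. fold q. rewrite Rabs_pos_eq.
    + replace (PA A m q * (Rr m k * q ^ k)) with (Rr m k * (q ^ k * PA A m q)) by ring.
      apply Rmult_le_compat. apply beta_nonneg. apply PA_nonneg. split. apply pow_le; lra. apply pow_lt_1_compat; lra || lia.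
      apply beta_le. apply PA_pow; auto.
    + apply Rmult_le_pos. apply beta_nonneg. apply PA_nonneg. split. apply pow_le; lra. apply pow_lt_1_compat; lra || lia.
  - apply ex_series_scal_l_R. apply ex_series_Rr. rewrite Rabs_pos_eq; lra.
Qed.

Lemma ball_R x e t : ball x e t -> Rabs (t - x) < e.
Proof. intros H. exact H. Qed.

Lemma loc_neg y : y < 0 -> locally y (fun t => t < 0).
Proof.
  intros Hy. exists (mkposreal (- y / 2) ltac:(lra)). intros t Ht. apply ball_R in Ht. simpl in Ht.
  apply Rabs_def2 in Ht. lra.
Qed.

Lemma PA_derive_id A m X : X * PSeries (PS_derive (alpha A m)) X = PA A (S m) X.
Proof.
  rewrite <- PSeries_incr_1. unfold PA. apply PSeries_ext. intros [|n].
  - unfold alpha. simpl. change (0 = aR A 0 * (0 * 0 ^ m)). ring.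
  - simpl. unfold PS_derive, alpha. replace (INR (S n) ^ S m) with (INR (S n) * INR (S n) ^ m) by reflexivity. ring.
Qed.

Lemma exp_lt1 c z : 0 < c -> z < 0 -> Rabs (exp (c * z)) < 1.
Proof.
  intros Hc Hz. rewrite Rabs_pos_eq by (left; apply exp_pos). rewrite <- exp_0. apply exp_increasing. nra.
Qed.

Lemma term_derive A m k z : z < 0 ->
  is_derive (fun y => beta m k * PA A m (exp (INR (S k) * y))) z (beta (S m) k * PA A (S m) (exp (INR (S k) * z))).
Proof.
  intros Hz. set (c := INR (S k)). assert (Hc : 0 < c) by (apply lt_0_INR; lia).
  set (X := exp (c * z)).
  assert (HX : Rabs X < 1) by (apply exp_lt1; auto).
  assert (H1 := is_derive_PSeries (alpha A m) X (alpha_rad A m X HX)).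
  assert (H2 : is_derive (fun y => exp (c * y)) z (c * exp (c * z))) by (auto_derive; auto; ring).
  assert (H3 := is_derive_comp (PSeries (alpha A m)) (fun y => exp (c * y)) z _ _ H1 H2).
  assert (H4 := is_derive_scal _ _ (beta m k) _ H3).
  replace (beta (S m) k * PA A (S m) X) with (beta m k * scal (c * exp (c * z)) (PSeries (PS_derive (alpha A m)) X)).
  exact H4.
  rewrite <- PA_derive_id. unfold c at 1. rewrite beta_S. fold c. fold X. unfold scal; simpl. unfold mult; simpl. ring.
Qed.

Lemma EE_derive A m y : A 0%nat = false -> y < 0 -> is_derive (EE A m) y (EE A (S m) y).
Proof.
  intros HA Hy. unfold EE.
  apply (series_derive (fun k z => beta m k * PA A m (exp (INR (S k) * z)))
                       (fun k z => beta (S m) k * PA A (S m) (exp (INR (S k) * z)))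
                       (fun k => beta (S m) k * PA A (S m) (exp (INR (S k) * (y / 2)))) y (- y / 2)).
  - lra.
  - intros n z Hz. apply Rabs_def2 in Hz. apply term_derive. lra.
  - intros n z Hz. apply Rabs_def2 in Hz.
    assert (Hc : 0 < INR (S n)) by (apply lt_0_INR; lia).
    assert (HX : 0 <= exp (INR (S n) * z) <= exp (INR (S n) * (y / 2))).
    { split. left; apply exp_pos. left; apply exp_increasing. nra. }
    assert (HX' : exp (INR (S n) * (y / 2)) < 1).
    { pose proof (exp_lt1 (INR (S n)) (y/2) Hc ltac:(lra)). rewrite Rabs_pos_eq in H; auto. left; apply exp_pos. }
    rewrite Rabs_pos_eq. apply Rmult_le_compat_l. apply beta_nonneg. apply PA_mono; auto.
    apply Rmult_le_pos. apply beta_nonneg. apply PA_nonneg. lra.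
  - apply ex_EE; auto. lra.
  - intros z Hz. apply Rabs_def2 in Hz. apply ex_EE; auto. lra.
Qed.

Lemma Derive_n_EE A m y : A 0%nat = false -> y < 0 -> Derive_n (EE A 0) m y = EE A m y.
Proof.
  intros HA. revert y. induction m; intros y Hy.
  - reflexivity.
  - simpl. rewrite (Derive_ext_loc _ (EE A m)).
    apply is_derive_unique. apply EE_derive; auto.
    destruct (loc_neg y Hy) as [e He]. exists e. intros t Ht. apply IHm. apply He; auto.
Qed.

Lemma Series_zero (a : nat -> R) : (forall n, a n = 0) -> Series a = 0.
Proof.
  intros H. rewrite (Series_ext _ (fun n => 0 * 1)). rewrite Series_scal_l. ring.
  intros n. rewrite H. ring.
Qed.

Lemma F_A_EE A y : A 0%nat = false -> y < 0 -> F_A A y = EE A 0 y.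
Proof.
  intros HA Hy. set (t := fun j k => beta 0 k * (alpha A 0 j * (exp (INR (S k) * y)) ^ j)).
  assert (Ht : forall j k, 0 <= t j k).
  { intros j k. unfold t. apply Rmult_le_pos. apply beta_nonneg. apply Rmult_le_pos. apply alpha_nonneg.
    apply pow_le. left; apply exp_pos. }
  assert (HXk : forall k, Rabs (exp (INR (S k) * y)) < 1) by (intros k; apply exp_lt1; auto; apply lt_0_INR; lia).
  assert (Hcol : forall k, ex_series (fun j => t j k)).
  { intros k. unfold t. apply ex_series_scal_l_R. apply ex_PA; auto. }
  assert (Hcols : forall k, Series (fun j => t j k) = beta 0 k * PA A 0 (exp (INR (S k) * y))).
  { intros k. unfold t. rewrite Series_scal_l. reflexivity. }
  assert (HL : ex_series (fun k => Series (fun j => t j k))).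
  { eapply ex_series_ext; [|apply (ex_EE A 0 y HA Hy)]. intros k. rewrite Hcols. reflexivity. }
  destruct (fubini_nonneg t Ht Hcol HL) as [_ Hf].
  unfold EE. rewrite (Series_ext _ (fun k => Series (fun j => t j k))) by (intros; rewrite Hcols; auto).
  rewrite <- Hf. unfold F_A. rewrite <- Series_opp. apply Series_ext. intros j.
  unfold t, alpha, aR. destruct (A j) eqn:Ej.
  - assert (Hj : (0 < j)%nat) by (destruct j; [rewrite HA in Ej; discriminate | lia]).
    assert (Hx : 0 <= exp (y * INR j) < 1).
    { split. left; apply exp_pos. rewrite <- exp_0. apply exp_increasing.
      assert (0 < INR j) by (apply lt_0_INR; auto). nra. }
    rewrite log_series by auto. apply Series_ext. intros k.
    rewrite !exp_pow'. unfold beta.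
    replace (INR j * (INR (S k) * y)) with (INR (S k) * (y * INR j)) by ring. rewrite !pow_O. field. apply not_0_INR; lia.
  - rewrite Series_zero. ring. intros k. rewrite !Rmult_0_l, Rmult_0_r. reflexivity.
Qed.

Lemma Derive_n_F_A A m y : A 0%nat = false -> y < 0 -> Derive_n (F_A A) m y = EE A m y.
Proof.
  intros HA Hy. rewrite <- Derive_n_EE; auto. apply Derive_n_ext_loc.
  destruct (loc_neg y Hy) as [e He]. exists e. intros t Ht. apply F_A_EE; auto.
Qed.

Definition A1 (j : nat) : bool := negb (Nat.eqb j 0).

Lemma A1_0 : A1 0%nat = false.
Proof. reflexivity. Qed.

Lemma aR_A1_S j : aR A1 (S j) = 1.
Proof. reflexivity. Qed.

Lemma alpha_A1_S p j : alpha A1 (S p) j = INR j ^ S p.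
Proof. unfold alpha. destruct j. simpl. ring. rewrite aR_A1_S. ring. Qed.

Lemma PA_upper A m X : 0 <= X < 1 -> PA A m X <= INR (Factorial.fact m) / (1 - X) ^ S m.
Proof.
  intros HX. rewrite <- (is_series_unique _ _ (is_series_Rr m X ltac:(rewrite Rabs_pos_eq; lra))).
  unfold PA, PSeries. apply Series_le. intros n. split.
  apply Rmult_le_pos. apply alpha_nonneg. apply pow_le; lra.
  apply Rmult_le_compat_r. apply pow_le; lra. apply alpha_le.
  apply ex_series_Rr. rewrite Rabs_pos_eq; lra.
Qed.

Lemma claimB m : exists K, 0 <= K /\ forall X, 0 <= X < 1 ->
  INR (Factorial.fact m) - K * (1 - X) <= (1 - X) ^ S m * PA A1 m X <= INR (Factorial.fact m).
Proof.
  assert (Hup : forall X, 0 <= X < 1 -> (1 - X) ^ S m * PA A1 m X <= INR (Factorial.fact m)).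
  { intros X HX. pose proof (PA_upper A1 m X HX).
    assert (0 < (1 - X) ^ S m) by (apply pow_lt; lra).
    apply (Rmult_le_compat_l ((1 - X) ^ S m)) in H; [|lra].
    replace ((1 - X) ^ S m * (INR (Factorial.fact m) / (1 - X) ^ S m)) with (INR (Factorial.fact m)) in H by (field; lra).
    exact H. }
  destruct m as [|p].
  - exists 1. split. lra. intros X HX. split; [|apply Hup; auto].
    assert (E : PA A1 0 X = X / (1 - X)).
    { unfold PA, PSeries. rewrite Series_incr_1. unfold alpha at 1. simpl (aR A1 0). rewrite Rmult_0_l, Rmult_0_l, Rplus_0_l.
      assert (G : Series (fun k => X ^ k) = / (1 - X)).
      { apply is_series_unique. apply is_series_geom. rewrite Rabs_pos_eq; lra. }
      rewrite (Series_ext _ (fun k => X * X ^ k)). rewrite Series_scal_l.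
      change (Series (pow X)) with (Series (fun k => X ^ k)). rewrite G. field. lra.
      intros k. unfold alpha. rewrite aR_A1_S. simpl. ring.
      apply ex_PA. rewrite Rabs_pos_eq; lra. }
    rewrite E. simpl. replace ((1 - X) * 1 * (X / (1 - X))) with X by (field; lra). lra.
  - destruct (Rr_diff p) as [c [Hc Hd]].
    exists (c * INR (Factorial.fact p)). split. apply Rmult_le_pos; auto. left; apply fact_pos_R.
    intros X HX. split; [|apply Hup; auto].
    assert (HX1 : Rabs X < 1) by (rewrite Rabs_pos_eq; lra).
    assert (E1 := is_series_unique _ _ (is_series_Rr (S p) X HX1)).
    assert (E2 := is_series_unique _ _ (is_series_Rr p X HX1)).
    assert (Ha : ex_series (fun n => Rr (S p) n * X ^ n)) by (apply ex_series_Rr; auto).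
    assert (Hb : ex_series (fun n => c * (Rr p n * X ^ n))) by (apply ex_series_scal_l_R, ex_series_Rr; auto).
    assert (Hc' : ex_series (fun n => alpha A1 (S p) n * X ^ n)) by (apply ex_PA; auto).
    assert (Hdiff : PA A1 (S p) X - (Series (fun n => Rr (S p) n * X ^ n) - Series (fun n => c * (Rr p n * X ^ n)))
       = Series (fun n => (INR n ^ S p - Rr (S p) n + c * Rr p n) * X ^ n)).
    { unfold PA, PSeries. rewrite <- Series_minus by auto. rewrite <- Series_minus by (auto; apply ex_series_minus_R; auto).
      apply Series_ext. intros n. cbv beta. rewrite alpha_A1_S. ring. }
    assert (Hnn : 0 <= Series (fun n => (INR n ^ S p - Rr (S p) n + c * Rr p n) * X ^ n)).
    { apply Series_nonneg'. intros n. apply Rmult_le_pos. specialize (Hd n). lra. apply pow_le; lra.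
      eapply ex_series_ext_R; [|apply ex_series_minus_R; [exact Hc'| apply ex_series_minus_R; [exact Ha | exact Hb]]].
      intros n. cbv beta. rewrite alpha_A1_S. ring. }
    rewrite Series_scal_l, E1, E2 in Hdiff.
    assert (Hpos : 0 < (1 - X) ^ S (S p)) by (apply pow_lt; lra).
    assert (H3 : (1 - X) ^ S (S p) * (INR (Factorial.fact (S p)) / (1 - X) ^ S (S p) - c * (INR (Factorial.fact p) / (1 - X) ^ S p))
               <= (1 - X) ^ S (S p) * PA A1 (S p) X).
    { apply Rmult_le_compat_l. lra. lra. }
    replace ((1 - X) ^ S (S p) * (INR (Factorial.fact (S p)) / (1 - X) ^ S (S p) - c * (INR (Factorial.fact p) / (1 - X) ^ S p)))
      with (INR (Factorial.fact (S p)) - c * INR (Factorial.fact p) * (1 - X)) in H3.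
    lra. simpl. field. split; [apply pow_nonzero|]; lra.
Qed.



Lemma countA_sum A n : A 0%nat = false -> countA A n = sum_n (aR A) n.
Proof.
  intros HA. unfold countA, sum_n. rewrite (sum_Sn_m (aR A) 0 n) by lia.
  assert (aR A 0 = 0) by (unfold aR; rewrite HA; auto).
  rewrite H. change (sum_n_m (fun k : nat => if A k then 1 else 0) 1 n = 0 + sum_n_m (aR A) 1 n). rewrite Rplus_0_l. reflexivity.
Qed.

Lemma sum_aR_A1 n : sum_n (aR A1) n = INR n.
Proof. induction n. rewrite sum_O. reflexivity. rewrite sum_n_S_R, IHn, aR_A1_S, S_INR. reflexivity. Qed.

Lemma aR_le_A1 A j : A 0%nat = false -> aR A j <= aR A1 j.
Proof. intros HA. destruct j. unfold aR. rewrite HA. simpl. lra. rewrite aR_A1_S. apply aR_bound. Qed.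

Lemma sum_le_n (a b : nat -> R) n : (forall k, a k <= b k) -> sum_n a n <= sum_n b n.
Proof. intros H. induction n. rewrite !sum_O. auto. rewrite !sum_n_S_R. specialize (H (S n)). lra. Qed.

Lemma sum_aR_bound A n : A 0%nat = false -> 0 <= sum_n (aR A) n <= INR n.
Proof.
  intros HA. split. apply sum_n_nonneg. intros; apply aR_bound.
  rewrite <- sum_aR_A1. apply sum_le_n. intros; apply aR_le_A1; auto.
Qed.

Definition Dn A d n := sum_n (fun j => aR A j - d * aR A1 j) n.

Lemma Dn_eq A d n : Dn A d n = sum_n (aR A) n - d * INR n.
Proof.
  unfold Dn. induction n. rewrite !sum_O. change (aR A 0 - d * aR A1 0 = aR A 0 - d * INR 0). simpl. replace (aR A1 0) with 0 by reflexivity. ring.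
  rewrite !sum_n_S_R, IHn, aR_A1_S, S_INR. req. ring.
Qed.

Lemma D_bound A d : A 0%nat = false -> has_density A d -> forall eps, 0 < eps ->
  exists K, 0 <= K /\ forall n, Rabs (Dn A d n) <= eps * INR n + K.
Proof.
  intros HA Hd eps He. unfold has_density in Hd. apply is_lim_seq_spec in Hd.
  destruct (Hd (mkposreal eps He)) as [N HN]. simpl in HN.
  exists ((1 + Rabs d) * INR N). split. apply Rmult_le_pos. pose proof (Rabs_pos d); lra. apply pos_INR.
  intros n. rewrite Dn_eq. destruct (Compare_dec.le_lt_dec N n) as [Hn|Hn]; [destruct n|].
  - rewrite sum_O. unfold aR; rewrite HA. simpl. rewrite Rmult_0_r, Rminus_0_r, Rabs_R0.
    pose proof (Rabs_pos d). pose proof (pos_INR N). nra.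
  - specialize (HN (S n) Hn). rewrite <- countA_sum by auto.
    assert (Hpos : 0 < INR (S n)) by (apply lt_0_INR; lia).
    replace (countA A (S n) - d * INR (S n)) with (INR (S n) * (countA A (S n) / INR (S n) - d)) by (field; lra).
    rewrite Rabs_mult, Rabs_pos_eq by lra.
    assert (0 <= (1 + Rabs d) * INR N) by (apply Rmult_le_pos; [pose proof (Rabs_pos d); lra | apply pos_INR]).
    nra.
  - pose proof (sum_aR_bound A n HA).
    assert (INR n <= INR N) by (apply le_INR; lia).
    eapply Rle_trans. apply Rabs_triang. rewrite Rabs_Ropp, Rabs_mult, (Rabs_pos_eq (INR n)) by apply pos_INR.
    rewrite Rabs_pos_eq by lra. pose proof (Rabs_pos d). pose proof (pos_INR n). nra.
Qed.

Lemma sbp (D : nat -> R) m : D 0%nat = 0 -> forall n,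
  sum_n (fun j => (D j - prevB D j) * INR j ^ m) (S n) = D (S n) * INR (S n) ^ m - sum_n (fun j => D j * (INR (S j) ^ m - INR j ^ m)) n.
Proof.
  intros H0 n. induction n.
  - rewrite sum_n_S_R, !sum_O. simpl prevB. rewrite H0. req; ring.
  - rewrite sum_n_S_R, IHn, (sum_n_S_R (fun j => D j * (INR (S j) ^ m - INR j ^ m))). simpl prevB. req; ring.
Qed.

Lemma tel_sum m n : sum_n (fun j => INR (S j) ^ m - INR j ^ m) n = INR (S n) ^ m - INR 0 ^ m.
Proof. induction n. rewrite sum_O. reflexivity. rewrite sum_n_S_R, IHn. req; ring. Qed.

Lemma sum_abs_bound (D w : nat -> R) M n : (forall j, (j <= n)%nat -> Rabs (D j) <= M) -> (forall j, 0 <= w j) ->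
  Rabs (sum_n (fun j => D j * w j) n) <= M * sum_n w n.
Proof.
  intros HD Hw. induction n.
  - rewrite !sum_O. rewrite Rabs_mult, (Rabs_pos_eq (w 0%nat)) by auto. apply Rmult_le_compat_r; auto.
  - rewrite !sum_n_S_R. eapply Rle_trans. apply Rabs_triang. rewrite Rabs_mult, (Rabs_pos_eq (w (S n))) by auto.
    assert (Rabs (D (S n)) * w (S n) <= M * w (S n)) by (apply Rmult_le_compat_r; auto).
    assert (Rabs (sum_n (fun j => D j * w j) n) <= M * sum_n w n) by (apply IHn; intros; apply HD; lia).
    lra.
Qed.

Lemma sbp_bound (D : nat -> R) m eps K : D 0%nat = 0 -> 0 <= eps -> 0 <= K ->
  (forall j, Rabs (D j) <= eps * INR j + K) ->
  forall n, Rabs (sum_n (fun j => (D j - prevB D j) * INR j ^ m) n) <= 2 * (eps * INR n + K) * INR n ^ m.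
Proof.
  intros H0 He HK HD [|n].
  - rewrite sum_O. simpl prevB. rewrite H0. rewrite Rminus_0_r, Rmult_0_l, Rabs_R0.
    apply Rmult_le_pos. simpl. lra. apply pow_le. simpl; lra.
  - rewrite sbp by auto.
    assert (HM : forall j, (j <= n)%nat -> Rabs (D j) <= eps * INR (S n) + K).
    { intros j Hj. eapply Rle_trans. apply HD. assert (INR j <= INR (S n)) by (apply le_INR; lia). nra. }
    assert (Hw : forall j, 0 <= INR (S j) ^ m - INR j ^ m).
    { intros j. assert (INR j ^ m <= INR (S j) ^ m). apply pow_incr. split. apply pos_INR. apply le_INR; lia. lra. }
    pose proof (sum_abs_bound D _ _ n HM Hw) as H1. rewrite tel_sum in H1.
    assert (H2 : Rabs (D (S n) * INR (S n) ^ m) <= (eps * INR (S n) + K) * INR (S n) ^ m).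
    { rewrite Rabs_mult, (Rabs_pos_eq (INR (S n) ^ m)) by (apply pow_le, pos_INR). apply Rmult_le_compat_r.
      apply pow_le, pos_INR. apply HD. }
    assert (H3 : 0 <= INR 0 ^ m) by (apply pow_le; simpl; lra).
    assert (H4 : 0 <= eps * INR (S n) + K) by (pose proof (pos_INR (S n)); nra).
    unfold Rminus at 1. eapply Rle_trans. apply Rabs_triang. rewrite Rabs_Ropp. nra.
Qed.

Lemma claimA A d m : A 0%nat = false -> has_density A d -> forall eps, 0 < eps ->
  exists K, 0 <= K /\ forall X, 0 <= X < 1 ->
  Rabs ((1 - X) ^ S m * (PA A m X - d * PA A1 m X)) <= eps + K * (1 - X).
Proof.
  intros HA Hd eps He.
  assert (Hf : 0 < INR (Factorial.fact (S m))) by apply fact_pos_R.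
  set (e' := eps / (2 * INR (Factorial.fact (S m)))).
  assert (He' : 0 < e') by (unfold e'; apply Rdiv_lt_0_compat; lra).
  destruct (D_bound A d HA Hd e' He') as [K' [HK' HD]].
  set (D := Dn A d) in *.
  assert (HD0 : D 0%nat = 0).
  { unfold D. rewrite Dn_eq. rewrite sum_O. unfold aR. rewrite HA. simpl. ring. }
  set (B := fun n => sum_n (fun j => (D j - prevB D j) * INR j ^ m) n).
  assert (HB : forall n, Rabs (B n) <= 2 * (e' * INR n + K') * INR n ^ m).
  { intros n. apply sbp_bound; auto; lra. }
  assert (Hc : forall j, (D j - prevB D j) * INR j ^ m = alpha A m j - d * alpha A1 m j).
  { intros [|k]. simpl prevB. rewrite HD0. unfold alpha, aR. rewrite HA. simpl. ring.
    simpl prevB. unfold D, Dn. rewrite sum_n_S_R. unfold alpha. ring. }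
  assert (HBd : forall n, B n - prevB B n = alpha A m n - d * alpha A1 m n).
  { intros [|k]. simpl prevB. unfold B. rewrite sum_O. rewrite <- Hc. simpl prevB. req. ring.
    simpl prevB. unfold B. rewrite sum_n_S_R. rewrite <- Hc. ring. }
  exists (2 * K' * INR (Factorial.fact m)). split. 
  { apply Rmult_le_pos. lra. left; apply fact_pos_R. }
  intros X HX.
  assert (HX1 : Rabs X < 1) by (rewrite Rabs_pos_eq; lra).
  set (bnd := fun n => 2 * e' * (Rr (S m) n * X ^ n) + 2 * K' * (Rr m n * X ^ n)).
  assert (Hbnd : forall n, Rabs (B n * X ^ n) <= bnd n).
  { intros n. rewrite Rabs_mult, (Rabs_pos_eq (X ^ n)) by (apply pow_le; lra).
    eapply Rle_trans. apply Rmult_le_compat_r. apply pow_le; lra. apply HB.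
    unfold bnd. pose proof (pow_le_Rr (S m) n). pose proof (pow_le_Rr m n).
    assert (0 <= X ^ n) by (apply pow_le; lra).
    replace (2 * (e' * INR n + K') * INR n ^ m * X ^ n) with
      (2 * e' * (INR n ^ S m * X ^ n) + 2 * K' * (INR n ^ m * X ^ n)) by (simpl; ring).
    apply Rplus_le_compat; apply Rmult_le_compat_l; try lra; apply Rmult_le_compat_r; lra. }
  assert (Hbex : ex_series bnd).
  { apply ex_series_plus_R; apply ex_series_scal_l_R; apply ex_series_Rr; auto. }
  assert (Hbs : Series bnd = 2 * e' * (INR (Factorial.fact (S m)) / (1 - X) ^ S (S m))
                            + 2 * K' * (INR (Factorial.fact m) / (1 - X) ^ S m)).
  { unfold bnd. rewrite Series_plus by (apply ex_series_scal_l_R; apply ex_series_Rr; auto).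
    rewrite !Series_scal_l. rewrite (is_series_unique _ _ (is_series_Rr (S m) X HX1)).
    rewrite (is_series_unique _ _ (is_series_Rr m X HX1)). reflexivity. }
  assert (HBex : ex_series (fun n => B n * X ^ n)) by (apply ex_series_le_R with bnd; auto).
  pose proof (tele B X HBex) as Ht.
  assert (Ht2 : Series (fun n => (alpha A m n - d * alpha A1 m n) * X ^ n) = (1 - X) * Series (fun n => B n * X ^ n)).
  { apply is_series_unique. eapply is_series_ext_R; [|exact Ht]. intros n. cbv beta. rewrite HBd. reflexivity. }
  assert (HP : PA A m X - d * PA A1 m X = Series (fun n => (alpha A m n - d * alpha A1 m n) * X ^ n)).
  { unfold PA, PSeries. rewrite <- Series_scal_l. rewrite <- Series_minus.
    apply Series_ext. intros n. ring. apply ex_PA; auto. apply ex_series_scal_l_R, ex_PA; auto. }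
  rewrite HP, Ht2.
  assert (HS := Series_abs_le _ _ Hbnd Hbex). rewrite Hbs in HS.
  assert (Hpos : 0 < 1 - X) by lra.
  replace ((1 - X) ^ S m * ((1 - X) * Series (fun n => B n * X ^ n))) with
    ((1 - X) ^ S (S m) * Series (fun n => B n * X ^ n)) by (simpl; ring).
  rewrite Rabs_mult, Rabs_pos_eq by (apply pow_le; lra).
  eapply Rle_trans. apply Rmult_le_compat_l. apply pow_le; lra. exact HS.
  right. unfold e'. rewrite <- !tech_pow_Rmult. field. split. apply pow_nonzero; lra. split. lra. apply Rgt_not_eq, fact_pos_R.
Qed.

Lemma claimAB A d m : A 0%nat = false -> has_density A d -> forall eps, 0 < eps ->
  exists K, 0 <= K /\ forall X, 0 <= X < 1 ->
  Rabs ((1 - X) ^ S m * PA A m X - d * INR (Factorial.fact m)) <= eps + K * (1 - X).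
Proof.
  intros HA Hd eps He. destruct (claimA A d m HA Hd eps He) as [K1 [HK1 H1]].
  destruct (claimB m) as [K2 [HK2 H2]].
  exists (K1 + Rabs d * K2). split. pose proof (Rabs_pos d). nra.
  intros X HX. specialize (H1 X HX). specialize (H2 X HX).
  replace ((1 - X) ^ S m * PA A m X - d * INR (Factorial.fact m)) with
    ((1 - X) ^ S m * (PA A m X - d * PA A1 m X) + d * ((1 - X) ^ S m * PA A1 m X - INR (Factorial.fact m))) by ring.
  eapply Rle_trans. apply Rabs_triang. rewrite (Rabs_mult d).
  assert (Rabs ((1 - X) ^ S m * PA A1 m X - INR (Factorial.fact m)) <= K2 * (1 - X)).
  { assert (0 <= K2 * (1 - X)) by (apply Rmult_le_pos; lra). apply Rabs_le; split; lra. }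
  assert (Rabs d * Rabs ((1 - X) ^ S m * PA A1 m X - INR (Factorial.fact m)) <= Rabs d * (K2 * (1 - X))).
  { apply Rmult_le_compat_l; auto. apply Rabs_pos. }
  lra.
Qed.

Lemma exp_neg_bounds t : 0 < t -> t / (1 + t) <= 1 - exp (- t) <= t.
Proof.
  intros Ht. split.
  - assert (H : 1 + t < exp t) by (apply exp_ineq1; lra).
    rewrite exp_Ropp. apply Rle_trans with (1 - / (1 + t)).
    right. field. lra. assert (/ exp t <= / (1 + t)). apply Rinv_le_contravar; lra. lra.
  - assert (H : 1 + - t < exp (- t)) by (apply exp_ineq1; lra). lra.
Qed.

Lemma pow_1t t n : 0 <= t <= 1 -> (1 + t) ^ n <= 1 + t * (2 ^ n - 1).
Proof.
  intros Ht. induction n. simpl. lra.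
  simpl. assert (H1 : 1 <= 2 ^ n) by (apply pow_R1_Rle; lra).
  assert (t * t <= t) by nra.
  assert ((1 + t) * (1 + t) ^ n <= (1 + t) * (1 + t * (2 ^ n - 1))) by (apply Rmult_le_compat_l; lra).
  nra.
Qed.

Definition gA A m t := t ^ S m * PA A m (exp (- t)).

Lemma g_lim A d m : A 0%nat = false -> has_density A d -> forall eta, 0 < eta ->
  exists del, 0 < del /\ forall t, 0 < t < del -> Rabs (gA A m t - d * INR (Factorial.fact m)) < eta.
Proof.
  intros HA Hd eta Heta. set (L := d * INR (Factorial.fact m)). set (P := 2 ^ S m).
  assert (HP : 1 <= P) by (apply pow_R1_Rle; lra).
  destruct (claimAB A d m HA Hd (eta / (4 * P)) ltac:(apply Rdiv_lt_0_compat; lra)) as [K [HK H]].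
  assert (HL := Rabs_pos L).
  set (del := Rmin 1 (eta / (4 * P * (K + Rabs L + 1)))).
  assert (Hdel : 0 < del). { unfold del. apply Rmin_pos. lra. apply Rdiv_lt_0_compat. lra. apply Rmult_lt_0_compat; lra. }
  exists del. split; auto. intros t [Ht0 Ht].
  assert (Ht1 : t <= 1) by (eapply Rle_trans; [left; exact Ht| apply Rmin_l]).
  assert (Ht2 : t * (4 * P * (K + Rabs L + 1)) < eta).
  { assert (t < eta / (4 * P * (K + Rabs L + 1))) by (eapply Rlt_le_trans; [exact Ht| apply Rmin_r]).
    assert (Hc : 0 < 4 * P * (K + Rabs L + 1)) by (apply Rmult_lt_0_compat; lra).
    apply (Rmult_lt_compat_r (4 * P * (K + Rabs L + 1))) in H0; auto.
    replace (eta / (4 * P * (K + Rabs L + 1)) * (4 * P * (K + Rabs L + 1))) with eta in H0 by (field; lra). exact H0. }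
  set (X := exp (- t)). set (u := 1 - X).
  destruct (exp_neg_bounds t Ht0) as [Hu1 Hu2]. fold X u in Hu1, Hu2.
  assert (Hu0 : 0 < u) by (eapply Rlt_le_trans; [|exact Hu1]; apply Rdiv_lt_0_compat; lra).
  assert (HX : 0 <= X < 1) by (split; [left; apply exp_pos | unfold u in Hu0; lra]).
  specialize (H X HX). fold u in H.
  set (r := t / u).
  assert (Hr1 : 1 <= r) by (unfold r; apply Rmult_le_reg_r with u; auto; unfold Rdiv; rewrite Rmult_assoc, Rinv_l; lra).
  assert (Hr2 : r <= 1 + t).
  { unfold r. apply Rmult_le_reg_r with u; auto. unfold Rdiv; rewrite Rmult_assoc, Rinv_l by lra.
    apply Rmult_le_reg_r with (/ (1 + t)). apply Rinv_0_lt_compat; lra.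
    replace ((1 + t) * u * / (1 + t)) with u by (field; lra). lra. }
  assert (HrP : r ^ S m <= P).
  { eapply Rle_trans. apply pow_incr. split. lra. exact Hr2. eapply Rle_trans. apply pow_1t. lra.
    change (2 ^ S m) with P. nra. }
  assert (HrP' : r ^ S m - 1 <= t * P).
  { eapply Rle_trans. apply Rplus_le_compat_r. apply pow_incr. split. lra. exact Hr2.
    pose proof (pow_1t t (S m) ltac:(lra)). change (2 ^ S m) with P in H0. nra. }
  assert (Hr1' : 1 <= r ^ S m) by (apply pow_R1_Rle; auto).
  unfold gA. fold X.
  replace (t ^ S m * PA A m X - L) with (r ^ S m * (u ^ S m * PA A m X - L) + L * (r ^ S m - 1)).
  2: { assert (Ht' : t ^ S m = r ^ S m * u ^ S m).
       { rewrite <- Rpow_mult_distr. unfold r. f_equal. field. lra. }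
       rewrite Ht'. ring. }
  eapply Rle_lt_trans. apply Rabs_triang. rewrite !Rabs_mult, (Rabs_pos_eq (r ^ S m)) by lra.
  rewrite (Rabs_pos_eq (r ^ S m - 1)) by lra.
  assert (H3 : r ^ S m * Rabs (u ^ S m * PA A m X - L) <= P * (eta / (4 * P) + K * t)).
  { apply Rmult_le_compat. lra. apply Rabs_pos. auto. fold L in H. nra. }
  assert (H4 : Rabs L * (r ^ S m - 1) <= Rabs L * (t * P)) by (apply Rmult_le_compat_l; auto).
  assert (H5 : P * (eta / (4 * P)) = eta / 4) by (field; lra).
  nra.
Qed.

Lemma term_le_sum_f (f : nat -> R) m : (forall k, 0 <= f k) -> f m <= sum_f_R0 f m.
Proof.
  intros H. destruct m. simpl. lra. rewrite tech5. pose proof (cond_pos_sum f m H). lra.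
Qed.

Lemma pow_exp_bound y m : 0 <= y -> y ^ m <= 2 ^ m * INR (Factorial.fact m) * exp (y / 2).
Proof.
  intros Hy. pose proof (exp_ge_taylor (y / 2) m ltac:(lra)) as H.
  pose proof (term_le_sum_f (fun k => (y / 2) ^ k / INR (Factorial.fact k)) m) as H1.
  assert (H2 : (y / 2) ^ m / INR (Factorial.fact m) <= exp (y / 2)).
  { eapply Rle_trans; [apply H1|exact H]. intros k. apply Rmult_le_pos. apply pow_le; lra.
    left; apply Rinv_0_lt_compat, fact_pos_R. }
  assert (Hf := fact_pos_R m).
  assert (H3 : (y / 2) ^ m <= INR (Factorial.fact m) * exp (y / 2)).
  { apply (Rmult_le_compat_r (INR (Factorial.fact m))) in H2; [|lra].
    replace ((y / 2) ^ m / INR (Factorial.fact m) * INR (Factorial.fact m)) with ((y / 2) ^ m) in H2 by (field; lra). lra. }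
  replace (y ^ m) with (2 ^ m * (y / 2) ^ m) by (rewrite <- Rpow_mult_distr; f_equal; field).
  rewrite Rmult_assoc. apply Rmult_le_compat_l. apply pow_le; lra. auto.
Qed.

Lemma g_bound A m : A 0%nat = false -> exists K, forall t, 0 < t -> 0 <= gA A m t <= K.
Proof.
  intros HA. set (C := 2 ^ m * INR (Factorial.fact m)).
  assert (HC : 0 < C) by (apply Rmult_lt_0_compat; [apply pow_lt; lra | apply fact_pos_R]).
  exists (2 * C). intros t Ht.
  set (X := exp (- t)). set (q := exp (- t / 2)).
  assert (HX : 0 <= X < 1) by (split; [left; apply exp_pos| unfold X; rewrite <- exp_0; apply exp_increasing; lra]).
  assert (Hq : 0 <= q < 1) by (split; [left; apply exp_pos| unfold q; rewrite <- exp_0; apply exp_increasing; lra]).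
  assert (HX1 : Rabs X < 1) by (rewrite Rabs_pos_eq; lra).
  assert (Hq1 : Rabs q < 1) by (rewrite Rabs_pos_eq; lra).
  split.
  { unfold gA. apply Rmult_le_pos. apply pow_le; lra. apply PA_nonneg. auto. }
  set (b := fun j => match j with O => 0 | S _ => C * t * q ^ j end).
  assert (Hbs : is_series b (C * t * q / (1 - q))).
  { apply is_series_decr_1. simpl b. 
    match goal with |- is_series _ ?l => replace l with (C * t * q * / (1 - q)) end.
    eapply is_series_ext_R; [|apply (is_series_scal (C * t * q) _ _ (is_series_geom q Hq1))].
    intros n. simpl. change (C * t * q * q ^ n = C * t * (q * q ^ n)). ring.
    change (C * t * q * / (1 - q) = C * t * q / (1 - q) - 0). field. lra. }
  assert (Hterm : forall j, 0 <= t ^ S m * (alpha A m j * X ^ j) <= b j).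
  { intros j. split. apply Rmult_le_pos. apply pow_le; lra. apply Rmult_le_pos. apply alpha_nonneg. apply pow_le; lra.
    destruct j as [|k]. rewrite alpha_0 by auto. simpl b. lra.
    set (j := S k).
    assert (Hj : 0 < INR j) by (apply lt_0_INR; unfold j; lia).
    assert (Ha : alpha A m j <= INR j ^ m).
    { unfold alpha. pose proof (aR_bound A j). pose proof (pow_le (INR j) m (pos_INR j)). nra. }
    assert (HXj : X ^ j = exp (INR j * - t)) by (unfold X; apply exp_pow').
    assert (Hqj : q ^ j = exp (INR j * (- t / 2))) by (unfold q; apply exp_pow').
    assert (Hb : (t * INR j) ^ m <= C * exp (t * INR j / 2)) by (apply pow_exp_bound; nra).
    simpl b. fold j.
    apply Rle_trans with (t ^ S m * (INR j ^ m * X ^ j)).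
    { apply Rmult_le_compat_l. apply pow_le; lra. apply Rmult_le_compat_r. apply pow_le; lra. auto. }
    replace (t ^ S m * (INR j ^ m * X ^ j)) with (t * ((t * INR j) ^ m * X ^ j)) by (rewrite Rpow_mult_distr; simpl; ring).
    change (q * q ^ k) with (q ^ S k). fold j. replace (C * t * q ^ j) with (t * (C * q ^ j)) by ring. apply Rmult_le_compat_l. lra.
    apply Rle_trans with (C * exp (t * INR j / 2) * X ^ j).
    apply Rmult_le_compat_r. apply pow_le; lra. auto.
    rewrite HXj, Hqj, Rmult_assoc, <- exp_plus. right. f_equal. f_equal. field. }
  assert (Hex : ex_series b) by (eexists; exact Hbs).
  unfold gA, PA, PSeries. fold X. rewrite <- Series_scal_l.
  eapply Rle_trans. apply Series_le. exact Hterm. exact Hex.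
  rewrite (is_series_unique _ _ Hbs).
  assert (Hq2 : q * (1 + t / 2) <= 1).
  { assert (H : 1 + t / 2 < exp (t / 2)) by (apply exp_ineq1; lra).
    unfold q. replace (- t / 2) with (- (t / 2)) by field. rewrite exp_Ropp.
    apply (Rmult_le_reg_l (exp (t / 2))). apply exp_pos.
    rewrite <- Rmult_assoc, Rinv_r, Rmult_1_l, Rmult_1_r. lra. apply Rgt_not_eq, exp_pos. }
  apply (Rmult_le_reg_r (1 - q)). lra. unfold Rdiv. rewrite Rmult_assoc, Rinv_l, Rmult_1_r by lra. nra.
Qed.

Lemma fin_delta (P : nat -> R -> Prop) N :
  (forall k, (k < N)%nat -> exists del, 0 < del /\ forall s, 0 < s < del -> P k s) ->
  exists del, 0 < del /\ forall s, 0 < s < del -> forall k, (k < N)%nat -> P k s.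
Proof.
  induction N; intros H.
  - exists 1. split. lra. intros s _ k Hk. lia.
  - destruct IHN as [d1 [Hd1 H1]]. intros k Hk. apply H. lia.
    destruct (H N ltac:(lia)) as [d2 [Hd2 H2]].
    exists (Rmin d1 d2). split. apply Rmin_pos; auto.
    intros s [Hs0 Hs] k Hk. assert (s < d1) by (eapply Rlt_le_trans; [exact Hs|apply Rmin_l]).
    assert (s < d2) by (eapply Rlt_le_trans; [exact Hs|apply Rmin_r]).
    destruct (Nat.eq_dec k N) as [->|Hne]. apply H2; lra. apply H1. lra. lia.
Qed.

Lemma dom_series (w : nat -> R) (G : nat -> R -> R) L K :
  (forall k, 0 <= w k) -> ex_series w -> 0 <= K ->
  (forall k s, 0 < s -> Rabs (G k s) <= K) ->
  (forall k eta, 0 < eta -> exists del, 0 < del /\ forall s, 0 < s < del -> Rabs (G k s - L) < eta) ->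
  forall eps, 0 < eps -> exists del, 0 < del /\ forall s, 0 < s < del ->
    Rabs (Series (fun k => w k * G k s) - L * Series w) < eps.
Proof.
  intros Hw Hwe HK HG Hlim eps He.
  set (W := Series w). assert (HW : 0 <= W) by (apply Series_nonneg'; auto).
  set (M := K + Rabs L). assert (HM : 0 <= M) by (pose proof (Rabs_pos L); unfold M; lra).
  destruct (tail_small w Hwe (eps / (2 * (M + 1))) ltac:(apply Rdiv_lt_0_compat; lra)) as [N HN].
  specialize (HN N (le_n N)).
  set (eta := eps / (2 * (W + 1))).
  assert (Heta : 0 < eta) by (apply Rdiv_lt_0_compat; lra).
  destruct (fin_delta (fun k s => Rabs (G k s - L) < eta) N (fun k _ => Hlim k eta Heta)) as [del [Hdel Hfin]].
  exists del. split; auto. intros s Hs.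
  assert (Hs0 : 0 < s) by lra.
  assert (Hex : ex_series (fun k => w k * G k s)).
  { apply ex_series_le_R with (fun k => K * w k). intros k. rewrite Rabs_mult, Rabs_pos_eq by auto.
    rewrite Rmult_comm. apply Rmult_le_compat_r; auto. apply ex_series_scal_l_R; auto. }
  set (v := fun k => if Nat.ltb k N then 0 else w k).
  assert (Hv : ex_series v).
  { apply ex_series_le_R with w; auto. intros k. unfold v. destruct (Nat.ltb k N). rewrite Rabs_R0; auto.
    rewrite Rabs_pos_eq; auto. lra. }
  assert (Hvs : Series v = Series (fun k => w (N + k)%nat)).
  { rewrite (Series_incr_n_aux v N). apply Series_ext. intros k. unfold v.
    replace (Nat.ltb (N + k) N) with false. auto. symmetry. apply Nat.ltb_ge. lia.
    intros k Hk. unfold v. replace (Nat.ltb k N) with true. auto. symmetry. apply Nat.ltb_lt. auto. }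
  set (b := fun k => eta * w k + M * v k).
  assert (Hb : ex_series b) by (apply ex_series_plus_R; apply ex_series_scal_l_R; auto).
  assert (Hbs : Series b = eta * W + M * Series v).
  { unfold b. rewrite Series_plus by (apply ex_series_scal_l_R; auto). rewrite !Series_scal_l. reflexivity. }
  assert (E : Series (fun k => w k * G k s) - L * W = Series (fun k => w k * (G k s - L))).
  { unfold W. rewrite <- Series_scal_l. rewrite <- Series_minus; auto. apply Series_ext. intros; ring.
    apply ex_series_scal_l_R; auto. }
  rewrite E. eapply Rle_lt_trans. apply Series_abs_le with (b := b); auto.
  - intros k. unfold b, v. rewrite Rabs_mult, (Rabs_pos_eq (w k)) by auto.
    destruct (Nat.ltb k N) eqn:Ek.
    + apply Nat.ltb_lt in Ek. specialize (Hfin s Hs k Ek). simpl in Hfin.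
      assert (w k * Rabs (G k s - L) <= w k * eta) by (apply Rmult_le_compat_l; auto; lra). lra.
    + assert (Rabs (G k s - L) <= M).
      { unfold M. eapply Rle_trans. unfold Rminus. apply Rabs_triang. rewrite Rabs_Ropp. specialize (HG k s Hs0). lra. }
      assert (w k * Rabs (G k s - L) <= w k * M) by (apply Rmult_le_compat_l; auto).
      assert (0 <= eta * w k) by (apply Rmult_le_pos; lra || auto). nra.
  - rewrite Hbs, Hvs. apply Rabs_def2 in HN. destruct HN as [HN1 _].
    assert (H1 : eta * W < eps / 2).
    { unfold eta. apply Rmult_lt_reg_r with (2 * (W + 1)). lra.
      replace (eps / (2 * (W + 1)) * W * (2 * (W + 1))) with (eps * W) by (field; lra). nra. }
    assert (H2 : M * Series (fun k => w (N + k)%nat) <= M * (eps / (2 * (M + 1)))) by (apply Rmult_le_compat_l; lra).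
    assert (H3 : M * (eps / (2 * (M + 1))) < eps / 2).
    { apply Rmult_lt_reg_r with (2 * (M + 1)). lra.
      replace (M * (eps / (2 * (M + 1))) * (2 * (M + 1))) with (eps * M) by (field; lra). nra. }
    lra.
Qed.

Definition wz (k : nat) : R := / Rpower (INR (S k)) 2.

Lemma wz_eq k : wz k = / INR (S k) ^ 2.
Proof. unfold wz. replace 2 with (INR 2) at 1 by (simpl; ring). rewrite Rpower_pow. reflexivity. apply lt_0_INR; lia. Qed.

Lemma wz_pos k : 0 < wz k.
Proof. rewrite wz_eq. apply Rinv_0_lt_compat, pow_lt, lt_0_INR; lia. Qed.

Lemma step_ineq x : 0 <= x -> / (x + 2) ^ 2 <= 2 / (x + 2) - 2 / (x + 3).
Proof.
  intros Hx. assert (HD : 0 < (x + 2) ^ 2 * (x + 3)) by (apply Rmult_lt_0_compat; [apply pow_lt|]; lra).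
  replace (/ (x + 2) ^ 2) with ((x + 3) * / ((x + 2) ^ 2 * (x + 3))) by (field; lra).
  replace (2 / (x + 2) - 2 / (x + 3)) with ((2 * (x + 2)) * / ((x + 2) ^ 2 * (x + 3))) by (field; lra).
  apply Rmult_le_compat_r. left; apply Rinv_0_lt_compat; auto. lra.
Qed.

Lemma wz_partial n : sum_n wz n <= 2 - 2 / (INR n + 2).
Proof.
  induction n.
  - rewrite sum_O, wz_eq. simpl. lra.
  - rewrite sum_n_S_R, wz_eq. eapply Rle_trans. apply Rplus_le_compat_r. exact IHn.
    rewrite S_INR. replace (INR (S (S n))) with (INR n + 2) by (rewrite !S_INR; ring).
    pose proof (step_ineq (INR n) (pos_INR n)).
    rewrite S_INR. replace (INR n + 1 + 1) with (INR n + 2) by ring. replace (INR n + 1 + 2) with (INR n + 3) by ring. lra.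
Qed.

Lemma ex_wz : ex_series wz.
Proof.
  apply ex_series_pos_bound with 2. intros; left; apply wz_pos.
  intros n. eapply Rle_trans. apply wz_partial. assert (0 < 2 / (INR n + 2)).
  apply Rdiv_lt_0_compat. lra. pose proof (pos_INR n); lra. lra.
Qed.

Lemma zeta2_pos : 0 < zeta 2.
Proof.
  unfold zeta. change (fun n => / Rpower (INR (S n)) 2) with wz.
  eapply Rlt_le_trans. apply (wz_pos 0). apply term_le_Series. intros; left; apply wz_pos. apply ex_wz.
Qed.

Lemma term_id A m k s : 0 < s ->
  s ^ S m * (beta m k * PA A m (exp (INR (S k) * - s))) = wz k * gA A m (INR (S k) * s).
Proof.
  intros Hs. unfold gA. rewrite wz_eq. replace (- (INR (S k) * s)) with (INR (S k) * - s) by ring.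
  unfold beta. rewrite Rpow_mult_distr. rewrite <- !tech_pow_Rmult.
  assert (0 < INR (S k)) by (apply lt_0_INR; lia). field. lra.
Qed.

Theorem proposition4p4 (A : nat -> bool) (d : R) :
  A 0%nat = false ->
  has_density A d ->
  0 < d ->
  forall m : nat,
    filterlim
      (fun s => Derive_n (F_A A) m (- s)
                / (d * zeta 2 * Gamma_nat_succ m * / s ^ (S m)))
      (at_right 0) (locally 1).
Proof.
  intros HA Hd Hd0 m.
  set (L := d * INR (Factorial.fact m)).
  assert (HL : 0 < L) by (apply Rmult_lt_0_compat; auto; apply fact_pos_R).
  destruct (g_bound A m HA) as [K HK].
  assert (HK0 : 0 <= K) by (destruct (HK 1 ltac:(lra)); lra).
  set (G := fun k s => gA A m (INR (S k) * s)).
  assert (HGb : forall k s, 0 < s -> Rabs (G k s) <= K).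
  { intros k s Hs. unfold G. assert (0 < INR (S k) * s) by (apply Rmult_lt_0_compat; auto; apply lt_0_INR; lia).
    destruct (HK _ H). rewrite Rabs_pos_eq; auto. }
  assert (HGl : forall k eta, 0 < eta -> exists del, 0 < del /\ forall s, 0 < s < del -> Rabs (G k s - L) < eta).
  { intros k eta Heta. destruct (g_lim A d m HA Hd eta Heta) as [d0 [Hd00 Hd1]].
    assert (Hk : 0 < INR (S k)) by (apply lt_0_INR; lia).
    exists (d0 / INR (S k)). split. apply Rdiv_lt_0_compat; auto.
    intros s [Hs0 Hs]. unfold G. apply Hd1. split. apply Rmult_lt_0_compat; auto.
    apply (Rmult_lt_compat_l (INR (S k))) in Hs; auto. replace (INR (S k) * (d0 / INR (S k))) with d0 in Hs by (field; lra). auto. }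
  pose proof (dom_series wz G L K (fun k => Rlt_le _ _ (wz_pos k)) ex_wz HK0 HGb HGl) as Hdom.
  assert (HZ : zeta 2 = Series wz) by reflexivity.
  assert (HZ0 := zeta2_pos).
  assert (Hid : forall s, 0 < s -> s ^ S m * Derive_n (F_A A) m (- s) = Series (fun k => wz k * G k s)).
  { intros s Hs. rewrite Derive_n_F_A by (auto; lra). unfold EE. rewrite <- Series_scal_l.
    apply Series_ext. intros k. unfold G. apply term_id; auto. }
  apply filterlim_locally. intros eps.
  destruct (Hdom (eps * (L * zeta 2))) as [del [Hdel H]].
  { apply Rmult_lt_0_compat. apply cond_pos. apply Rmult_lt_0_compat; auto. }
  exists (mkposreal del Hdel). intros s Hball Hs.
  apply ball_R in Hball. simpl in Hball. rewrite Rminus_0_r, Rabs_pos_eq in Hball by lra.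
  specialize (H s ltac:(lra)). rewrite <- HZ in H. rewrite <- (Hid s Hs) in H.
  change (Rabs (Derive_n (F_A A) m (- s) / (d * zeta 2 * Gamma_nat_succ m * / s ^ S m) - 1) < eps).
  unfold Gamma_nat_succ.
  assert (Hsm : 0 < s ^ S m) by (apply pow_lt; auto).
  replace (Derive_n (F_A A) m (- s) / (d * zeta 2 * INR (Factorial.fact m) * / s ^ S m) - 1)
    with ((s ^ S m * Derive_n (F_A A) m (- s) - L * zeta 2) / (L * zeta 2)).
  2: { unfold L. field. split. lra. split. apply Rgt_not_eq, fact_pos_R. split; lra. }
  unfold Rdiv. rewrite Rabs_mult, (Rabs_pos_eq (/ (L * zeta 2))).
  2: { left. apply Rinv_0_lt_compat, Rmult_lt_0_compat; auto. }
  apply (Rmult_lt_reg_r (L * zeta 2)). apply Rmult_lt_0_compat; auto.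
  rewrite Rmult_assoc, Rinv_l, Rmult_1_r. exact H. apply Rgt_not_eq, Rmult_lt_0_compat; auto.
Qed.
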